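(* No vector $(x_\alpha,\dots,x_1)$ with $\alpha\ge2$ and $x_{\alpha-1}=1$ is realizable.
   Context: All graphs are finite, nonempty, and reflexive (every vertex has a loop). $N[v]$ is the closed neighborhood of $v$ (including $v$). For distinct $v,w$, $w$ strictly corners $v$ if $N[v]\subsetneq N[w]$; $v$ is then a strict corner. Corner ranking: set $G^{(1)}=G$, $k=1$. If $G^{(k)}$ is a clique, give all its vertices rank $k$ and stop. Else if $G^{(k)}$ has no strict corners, give all its vertices rank $\infty$ and stop. Else give every strict corner of $G^{(k)}$ rank $k$, delete them to get $G^{(k+1)}$ (induced subgraph), increase $k$ and repeat. The corner rank is the largest rank of a vertex; $X_k$ is the set of rank-$k$ vertices; cop-win graphs are exactly those of finite corner rank. A vector is a finite list of positive integers; the rank cardinality vector of a graph of corner rank $\alpha$ is $(x_\alpha,\dots,x_1)$ with $x_k=|X_k|$; a vector is realizable if it is the rank cardinality vector of some cop-win graph. *)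

(* Defs.v *)
From mathcomp Require Import all_boot.
Set Implicit Arguments. Unset Strict Implicit. Unset Printing Implicit Defensive.

(* Subgraphs are induced subgraphs on a
   vertex set [S : {set T}]. *)

Section CornerRanking.
Variables (T : finType) (adj : rel T).

Definition nbhd (S : {set T}) (v : T) : {set T} := [set u in S | adj v u].

Definition is_clique (S : {set T}) : bool :=
  [forall u in S, forall v in S, adj u v].

Definition strict_corners (S : {set T}) : {set T} :=
  [set v in S | [exists w in S, (w != v) && (nbhd S v \proper nbhd S w)]].

(* G_stage k = G^{(k+1)} (0-indexed stages) *)
Definition G_stage (k : nat) : {set T} :=
  iter k (fun S => S :\: strict_corners S) [set: T].

Definition corner_rank_is (alpha : nat) : Prop :=
  0 < alpha /\ is_clique (G_stage alpha.-1) /\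
  forall j, j < alpha.-1 ->
    ~~ is_clique (G_stage j) /\ strict_corners (G_stage j) != set0.

Definition rank_card (alpha k : nat) : nat :=
  if k == alpha then #|G_stage k.-1| else #|strict_corners (G_stage k.-1)|.

Definition rank_card_vector (alpha : nat) : seq nat :=
  [seq rank_card alpha (alpha - i) | i <- iota 0 alpha].

End CornerRanking.

Definition reflexive_graph (T : finType) (adj : rel T) : Prop :=
  0 < #|T| /\ (forall v, adj v v) /\ (forall u v, adj u v = adj v u).

Definition is_vector (x : seq nat) : Prop := all (fun n => 0 < n) x.

Definition realizable (x : seq nat) : Prop :=
  exists (T : finType) (adj : rel T), reflexive_graph adj /\
    exists alpha, corner_rank_is adj alpha /\ rank_card_vector adj alpha = x.

(* Main.v *)
Require Import Defs.
From mathcomp Require Import all_boot.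

Lemma core (T : finType) (adj : rel T) (S : {set T}) :
  (forall v, adj v v) -> (forall u v, adj u v = adj v u) ->
  #|strict_corners adj S| = 1 ->
  is_clique adj (S :\: strict_corners adj S) -> ~~ is_clique adj S -> False.
Proof.
move=> refl sym /eqP/cards1P [c Hc] Hcl Hncl.
rewrite Hc in Hcl.
have cS : c \in strict_corners adj S by rewrite Hc set11.
have Hclq : forall a b, a \in S -> b \in S -> a != c -> b != c -> adj a b.
  move=> a b aS bS ac bc.
  move/forallP: Hcl => /(_ a) /implyP; rewrite !inE ac aS => /(_ isT).
  by move/forallP => /(_ b) /implyP; rewrite !inE bc bS => /(_ isT).
move/forallPn: Hncl => [a]; rewrite negb_imply => /andP [aS].
move/forallPn => [b]; rewrite negb_imply => /andP [bS nab].
have [u [uS uc ncu]] : exists u, [/\ u \in S, u != c & ~~ adj c u].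
  case: (eqVneq a c) => [Eac|ac].
    subst a. exists b; split => //. apply/eqP => Ebc; subst b; by rewrite refl in nab.
  case: (eqVneq b c) => [Ebc|bc].
    subst b. exists a; split => //; by rewrite sym.
  by rewrite Hclq in nab.
move: cS; rewrite inE => /andP [cS /existsP [w /andP [wS /andP [wc Hprop]]]].
have cNw : c \in nbhd adj S w.
  move/properP: Hprop => [/subsetP Hsub _]; apply: Hsub; by rewrite inE cS refl.
have adjwc : adj w c by move: cNw; rewrite inE => /andP [].
have uw : u != w.
  apply/eqP => Euw; subst u; by rewrite sym adjwc in ncu.
have : u \in strict_corners adj S.
  rewrite inE uS; apply/existsP; exists w; rewrite wS eq_sym uw /=.
  apply/properP; split.
    apply/subsetP => y; rewrite !inE => /andP [yS auy]; rewrite yS /=.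
    case: (eqVneq y c) => [Eyc|yc].
      by subst y; rewrite sym auy in ncu.
    by apply: Hclq.
  exists c => //; by rewrite inE cS sym (negbTE ncu).
by rewrite Hc inE (negbTE uc).
Qed.

(* x = (x_alpha, ..., x_1) is a list; size x = alpha; nth 0 x 1 = x_{alpha-1}. *)
Theorem corollary3p19 (x : seq nat) :
  is_vector x -> 2 <= size x -> nth 0 x 1 = 1 -> ~ realizable x.
Proof.
move=> _ Hsz Hn [T [adj [[_ [refl sym]] [alpha [[a0 [Hcl Hj]] Hx]]]]].
subst x.
move: Hsz Hn Hcl Hj; rewrite /rank_card_vector size_map size_iota.
case: alpha a0 => [|[|n]] // _ _.
rewrite (nth_map 0) ?size_iota // nth_iota // /rank_card.
rewrite add0n subn1 /= (ltn_eqF (ltnSn n.+1)) => Hn Hcl Hj.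
have [Hncl _] := Hj n (ltnSn n).
exact: (@core _ _ _ refl sym Hn Hcl Hncl).
Qed.
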